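(* Let $L\ge2$ and let $S=(d,N_1,\dots,N_L)$ be a neural network architecture. Let $\varrho:\mathbb{R}\to\mathbb{R}$ be continuous and assume there is $x_0\in\mathbb{R}$ such that $\varrho$ is differentiable at $x_0$ with $\varrho'(x_0)\ne0$. Let $\Omega\subset\mathbb{R}^d$ have nonempty interior, and assume that $\mathcal{RNN}_\varrho^\Omega(S)$ does not contain infinitely many linearly independent functions. Then $\varrho$ is a polynomial.
   Context: A neural network with architecture $S=(N_0,\dots,N_L)$ ($N_0=d$) is a family $\Phi=((A_\ell,b_\ell))_{\ell=1}^L$, $A_\ell\in\mathbb{R}^{N_\ell\times N_{\ell-1}}$, $b_\ell\in\mathbb{R}^{N_\ell}$; $\mathcal{NN}(S)$ is the set of these. $\mathrm{R}_\varrho^\Omega(\Phi):\Omega\to\mathbb{R}^{N_L}$, $x\mapsto x_L$, where $x_0=x$, $x_\ell=\varrho(A_\ell x_{\ell-1}+b_\ell)$ for $1\le\ell\le L-1$ (componentwise), $x_L=A_Lx_{L-1}+b_L$; $\mathcal{RNN}_\varrho^\Omega(S)=\{\mathrm{R}_\varrho^\Omega(\Phi):\Phi\in\mathcal{NN}(S)\}$. *)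

(* Defs.v *)
From HB Require Import structures.
From mathcomp Require Import all_boot all_order all_algebra.
From mathcomp Require Import all_classical all_reals all_analysis.
Set Implicit Arguments. Unset Strict Implicit. Unset Printing Implicit Defensive.
Import Order.TTheory GRing.Theory Num.Theory.
Import numFieldNormedType.Exports.
Local Open Scope classical_set_scope.
Local Open Scope ring_scope.

(* A network with input dimension n0 and layer widths Ns = [:: N_1; ...; N_L]:
   a list of pairs (A_l, b_l), A_l : 'M_(N_l, N_{l-1}), b_l : 'cV_(N_l). *)
Fixpoint NN (R : realType) (n0 : nat) (Ns : seq nat) : Type :=
  match Ns with
  | [::] => unit
  | n1 :: Ns' => ('M[R]_(n1, n0) * 'cV[R]_n1) * NN R n1 Ns'
  end.

Fixpoint realize (R : realType) (rho : R -> R) (n0 : nat) (Ns : seq nat)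
  : NN R n0 Ns -> 'cV[R]_n0 -> 'cV[R]_(last n0 Ns) :=
  match Ns return NN R n0 Ns -> 'cV[R]_n0 -> 'cV[R]_(last n0 Ns) with
  | [::] => fun _ x => x
  | n1 :: Ns' => fun Phi x =>
      let y := Phi.1.1 *m x + Phi.1.2 in
      realize rho Phi.2 (if nilp Ns' then y else map_mx rho y)
  end.

(* RNN_rho^Omega(S) contains infinitely many linearly independent functions:
   there is a sequence of realizations whose restrictions to Omega are
   linearly independent (every finite initial segment is independent). *)
Definition inf_lin_indep_realizations (R : realType) (rho : R -> R)
  (d : nat) (Ns : seq nat) (Omega : set 'cV[R]_d) : Prop :=
  exists Phi : nat -> NN R d Ns,
    forall (n : nat) (c : 'I_n -> R),
      (forall x, Omega x -> \sum_(i < n) c i *: realize rho (Phi i) x = 0) ->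
      forall i, c i = 0.

Definition is_polynomial (R : realType) (rho : R -> R) : Prop :=
  exists p : {poly R}, forall x, rho x = p.[x].

(* Main.v *)
Require Import Defs.
From HB Require Import structures.
From mathcomp Require Import all_boot all_order all_algebra.
From mathcomp Require Import all_classical all_reals all_analysis.
From mathcomp Require Import ring lra qpoly.
Import Order.TTheory GRing.Theory Num.Theory.
Import numFieldNormedType.Exports.
Local Open Scope classical_set_scope.
Local Open Scope ring_scope.


Section Net.
Variable R : realType.
Variable rho : R -> R.

Fixpoint mkNN (ps : nat -> R * R) (l n0 : nat) (Ns : seq nat) : NN R n0 Ns :=
  match Ns return NN R n0 Ns with
  | [::] => tt
  | n1 :: Ns' =>
    ((\matrix_(i < n1, j < n0)
        (if ((i : nat) == 0%N) && ((j : nat) == 0%N) then (ps l).1 else 0),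
      \col_(i < n1) (if (i : nat) == 0%N then (ps l).2 else 0)),
     mkNN ps l.+1 n1 Ns')
  end.

Fixpoint chainf (ps : nat -> R * R) (l : nat) (Ns : seq nat) (t : R) : R :=
  match Ns with
  | [::] => t
  | _ :: Ns' => let y := (ps l).1 * t + (ps l).2 in
      chainf ps l.+1 Ns' (if nilp Ns' then y else rho y)
  end.

Lemma realize_mk ps (Ns : seq nat) : forall (n0 l : nat) (x : 'cV[R]_n0) (t : R),
  (0 < n0)%N -> all (fun n => 0 < n)%N Ns ->
  (forall j : 'I_n0, (j : nat) = 0%N -> x j 0 = t) ->
  forall i : 'I_(last n0 Ns), (i : nat) = 0%N ->
  realize rho (mkNN ps l n0 Ns) x i 0 = chainf ps l Ns t.
Proof.
elim: Ns => [|n1 Ns IH] n0 l x t n0p /= allp hx i i0.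
  exact: hx.
case/andP: allp => n1p allp.
apply: IH => // j j0.
have -> : (ps l).1 * t + (ps l).2 =
   ((mkNN ps l n0 (n1 :: Ns)).1.1 *m x + (mkNN ps l n0 (n1 :: Ns)).1.2) j 0.
  rewrite /= !mxE j0 eqxx /=.
  case: n0 n0p x hx => // n0 _ x hx.
  rewrite big_ord_recl /= mxE j0 eqxx /= (hx ord0) //.
  rewrite big1 ?addr0 // => k _; rewrite mxE /=.
  by rewrite j0 /= mul0r.
by case: (nilp Ns) => //; rewrite mxE.
Qed.

Fixpoint Hof (ps : nat -> R * R) (l k : nat) (t : R) : R :=
  match k with
  | 0%N => t
  | k'.+1 => Hof ps l.+1 k' (rho ((ps l).1 * t + (ps l).2))
  end.

Lemma chainf_Hof ps (Ns : seq nat) : forall l t k, size Ns = k.+1 ->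
  chainf ps l Ns t = (ps (l + k)%N).1 * Hof ps l k t + (ps (l + k)%N).2.
Proof.
elim: Ns => [|n1 Ns IH] l t k // [<-].
case: Ns IH => [|n2 Ns] IH.
  by rewrite /= addn0.
have -> : chainf ps l [:: n1, n2 & Ns] t =
  chainf ps l.+1 (n2 :: Ns) (rho ((ps l).1 * t + (ps l).2)) by [].
rewrite (IH l.+1 _ (size Ns)) //.
by rewrite addSnnS.
Qed.

Lemma Hof_outer ps k : forall l t,
  Hof ps l k.+1 t = rho ((ps (l + k)%N).1 * Hof ps l k t + (ps (l + k)%N).2).
Proof.
elim: k => [|k IH] l t; first by rewrite /= addn0.
have -> : Hof ps l k.+2 t = Hof ps l.+1 k.+1 (rho ((ps l).1 * t + (ps l).2)) by [].
by rewrite IH addSnnS.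
Qed.

Lemma Hof_ext ps ps' k : forall l t,
  (forall i, (l <= i < l + k)%N -> ps i = ps' i) ->
  Hof ps l k t = Hof ps' l k t.
Proof.
elim: k => [|k IH] l t //= H.
rewrite H ?leqnn ?addnS ?ltnS ?leq_addr //.
apply: IH => i /andP[li ilk]; apply: H.
by rewrite (ltnW li) /= addnS.
Qed.

Lemma Hof_cont ps k : forall l, continuous rho -> continuous (Hof ps l k).
Proof.
elim: k => [|k IH] l rc /=; first by move=> ?; exact: cvg_id.
move=> t; apply: continuous_comp; last exact: IH.
apply: continuous_comp; last exact: rc.
by apply: continuousD; [apply: continuousM; [exact: cvg_cst|exact: cvg_id]|exact: cvg_cst].
Qed.

End Net.

Section Greedy.
Variables (R : realType) (d : nat) (Ns : seq nat) (rho : R -> R) (Omega : set 'cV[R]_d).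
Local Notation T := (NN R d Ns).
Local Notation F := (realize rho).

Fixpoint iterS (next : seq T -> T) (k : nat) : seq T :=
  if k is k'.+1 then rcons (iterS next k') (next (iterS next k')) else [::].

Definition inspan (s : seq T) (P : T) :=
  exists a : nat -> R, forall x, Omega x ->
    F P x = \sum_(i < size s) a i *: F (nth P s i) x.

Lemma span_exists : ~ inf_lin_indep_realizations rho Ns Omega ->
  exists s, forall P, inspan s P.
Proof.
move=> NI; apply: contrapT => NS.
have H : forall s, exists P, ~ inspan s P.
  move=> s; apply: contrapT => H; apply: NS; exists s => P.
  by apply: contrapT => nP; apply: H; exists P.
pose next s := proj1_sig (cid (H s)).
have Hnext s : ~ inspan s (next s) := proj2_sig (cid (H s)).
pose S := iterS next.
have sizeS k : size (S k) = k.
  by elim: k => // k IH; rewrite /S /= size_rcons -/(S k) IH.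
have nthS k i P : (i < k)%N -> nth P (S k) i = next (S i).
  elim: k => // k IH; rewrite ltnS leq_eqVlt => /orP[/eqP ->|ik]; rewrite /S /= -/(S _).
    by rewrite nth_rcons sizeS ltnn eqxx.
  by rewrite nth_rcons sizeS ik IH.
apply: NI; exists (fun k => next (S k)).
elim=> [|n IH] c Hc i0; first by case: i0.
have Hc' x : Omega x -> \sum_(i < n) c (widen_ord (leqnSn n) i) *: F (next (S i)) x
    + c ord_max *: F (next (S n)) x = 0.
  by move=> /Hc; rewrite big_ord_recr.
have cmax : c ord_max = 0.
  apply: contrapT => /eqP cn0; apply: (Hnext (S n)).
  exists (fun i => - (c (inord i)) / c ord_max) => x Ox.
  rewrite sizeS.
  have := Hc' x Ox; rewrite addrC => /eqP; rewrite addr_eq0 => /eqP E.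
  apply: (scalerI cn0); rewrite E scaler_sumr -sumrN.
  apply: eq_bigr => i _.
  rewrite scalerA mulrC divfK //.
  rewrite nthS // scaleNr; congr (- (_ *: _)).
  congr c; apply: val_inj; rewrite /= inordK //; exact: (ltnW (ltn_ord i)).
have Hr : forall i, c (widen_ord (leqnSn n) i) = 0.
  apply: IH => x Ox; have := Hc' x Ox.
  by rewrite cmax scale0r addr0.
have [/eqP iE|iN] := boolP ((i0 : nat) == n).
  by rewrite -cmax; congr c; apply: val_inj.
have ilt : (i0 < n)%N by rewrite ltn_neqAle iN -ltnS ltn_ord.
by rewrite -(Hr (Ordinal ilt)); congr c; apply: val_inj.
Qed.
End Greedy.

Lemma ker_exists (R : fieldType) m (G : 'M[R]_(m, m.+1)) :
  exists mu : 'I_m.+1 -> R, (exists j, mu j != 0) /\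
    forall i, \sum_j G i j * mu j = 0.
Proof.
set C := cokermx G.
have CN0 : C != 0.
  rewrite -mxrank_eq0 /C mxrank_coker subn_eq0 -ltnNge ltnS.
  exact: rank_leq_row.
have HC := mulmx_coker G; rewrite -/C in HC; clearbody C.
have [i [j Cij]] : exists i j, C i j != 0.
  apply: contrapT => H; move/negP: CN0; apply; apply/eqP/matrixP => i j.
  rewrite mxE; apply/eqP; apply: contrapT => /negP Hn; apply: H.
  by exists i, j.
exists (fun k => C k j); split; first by exists i.
move=> k; move/matrixP: HC => /(_ k j).
by rewrite !mxE.
Qed.





Lemma moment_nz (R : fieldType) n (sig mu : nat -> R) : injective sig ->
  (exists k, (k < n)%N /\ mu k != 0) ->
  exists K, (K < n)%N /\ \sum_(j < n) mu j * sig j ^+ K != 0.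
Proof.
move=> sinj [k [kn muk]]; apply: contrapT => H.
have mom0 K : (K < n)%N -> \sum_(j < n) mu j * sig j ^+ K = 0.
  move=> Kn; apply/eqP; apply: contrapT => HK; apply: H; exists K; split => //.
  exact/negP.
have n0 : (0 < n)%N by apply: leq_ltn_trans kn.
pose L := tnth (@lagrange R n sig) (Ordinal kn).
have E1 : \sum_(j < n) mu j * L.[sig j] = mu k.
  rewrite (bigD1 (Ordinal kn)) // big1 ?addr0.
    by rewrite /L (lagrange_sample n0 sinj) eqxx mulr1 /= addr0.
  move=> j jk; rewrite /L lagrange_sample //.
  by rewrite eq_sym (negPf jk) mulr0.
have E2 : \sum_(j < n) mu j * L.[sig j] = 0.
  have sL : (size L <= n)%N by rewrite /L size_lagrange_.
  under eq_bigr => j _ do rewrite (horner_coef_wide _ sL) mulr_sumr.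
  rewrite exchange_big /= big1 // => i _.
  under eq_bigr => j _ do rewrite mulrCA.
  by rewrite -mulr_sumr mom0 ?mulr0.
by move: muk; rewrite -E1 E2 eqxx.
Qed.
Section H.
Variable R : realType.
Implicit Types f g : R -> R.

Lemma isd_add f g (x df dg : R) : is_derive x 1 f df -> is_derive x 1 g dg ->
  is_derive x 1 (fun y => f y + g y) (df + dg).
Proof. move=> H1 H2; exact: is_deriveD. Qed.

Lemma isd_sub f g (x df dg : R) : is_derive x 1 f df -> is_derive x 1 g dg ->
  is_derive x 1 (fun y => f y - g y) (df - dg).
Proof. move=> H1 H2; exact: is_deriveB. Qed.

Lemma isd_cmul f (x df c : R) : is_derive x 1 f df ->
  is_derive x 1 (fun y => c * f y) (c * df).
Proof.
move=> H; have := @is_deriveZ _ _ _ f c x 1 df H.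
by [].
Qed.

Lemma isd_mulc f (x df c : R) : is_derive x 1 f df ->
  is_derive x 1 (fun y => f y * c) (df * c).
Proof.
move=> H.
have -> : (fun y => f y * c) = (fun y => c * f y) by apply/funext=> y; rewrite mulrC.
rewrite mulrC; exact: isd_cmul.
Qed.

Lemma isd_cst (x c : R) : is_derive x 1 (fun _ : R => c) 0.
Proof. exact: is_derive_cst. Qed.

Lemma isd_sum n (f : 'I_n -> R -> R) (df : 'I_n -> R) (x : R) :
  (forall i, is_derive x 1 (f i) (df i)) ->
  is_derive x 1 (fun y => \sum_(i < n) f i y) (\sum_(i < n) df i).
Proof.
move=> H; have := is_derive_sum H.
by rewrite fct_sumE.
Qed.

Lemma cvg_sumf {T : Type} (F : set_system T) {FF : Filter F} n
  (f : 'I_n -> T -> R) (l : 'I_n -> R) :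
  (forall i, f i x @[x --> F] --> l i) ->
  (\sum_(i < n) f i x) @[x --> F] --> \sum_(i < n) l i.
Proof.
move=> H; apply: (@cvg_big R 'I_n +%R 0 predT) => //.
exact: add_continuous.
Qed.

Lemma test (w d S : R) : 0 <= w <= 1 -> `|d| <= S -> - S <= w * d.
Proof.
move=> /andP[w0 w1] dS.
have H : `|w * d| <= S.
  by apply: le_trans dS; rewrite normrM ler_piMl // ger0_norm.
exact: lerNnormlW.
Qed.
Lemma ftc_loc (h : R -> R) (a y : R) : continuous h -> a < y ->
  is_derive y 1 (fun z => (\int[lebesgue_measure]_(t in `[a, z]) h t)%R) (h y).
Proof.
move=> hc ay.
have [] := @continuous_FTC1_closed R h a y (y + 1) _ _ ay (hc y).
- by rewrite ltrDl.
- apply: continuous_compact_integrable; first exact: segment_compact.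
  exact: continuous_subspaceT.
move=> d1 d2; apply: DeriveDef => //.
by rewrite -derive1E.
Qed.

Lemma is_derive_aff (c b w : R) : is_derive w 1 (fun w => w * c + b) c.
Proof.
apply: DeriveDef.
  apply: derivableD; last exact: derivable_cst.
  apply: derivableM; [exact: derivable_id | exact: derivable_cst].
rewrite deriveD; last exact: derivable_cst.
  rewrite deriveM; [|exact: derivable_id|exact: derivable_cst].
  by rewrite derive_id derive_cst /= derive_cst scaler0 add0r addr0 /GRing.scale /= mulr1.
apply: derivableM; [exact: derivable_id | exact: derivable_cst].
Qed.

Lemma is_derive_comp_aff (f : R -> R) (df c b w : R) :
  is_derive (w * c + b) 1 f df -> is_derive w 1 (fun w => f (w * c + b)) (df * c).
Proof.
move=> H; have := @is_derive1_comp R f (fun w => w * c + b) w df c H (is_derive_aff c b w).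
by [].
Qed.

Lemma isd_val f (x df df' : R) : is_derive x 1 f df -> df = df' -> is_derive x 1 f df'.
Proof. by move=> H <-. Qed.

Lemma isd_shift f (x b df : R) : is_derive (x + b) 1 f df ->
  is_derive x 1 (fun y => f (y + b)) df.
Proof.
move=> H; have := @is_derive_comp_aff f df 1 b x; rewrite mulr1 => /(_ H).
have -> : (fun w => f (w * 1 + b)) = (fun y => f (y + b)) by apply/funext => w; rewrite mulr1.
by rewrite mulr1.
Qed.

Definition Qd (h : R -> R) (dl y : R) := if dl == 0 then 0 else (h (y + dl) - h y) / dl.

Lemma regularity (n : nat) (sig : nat -> R) (h : R -> R) (mu : nat -> R) (k : nat) :
  injective sig -> continuous h ->
  (forall w b, \sum_(j < n) mu j * h (w * sig j + b) = 0) ->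
  (k < n)%N -> mu k != 0 ->
  forall x0 : R, is_derive x0 1 h (- (mu k)^-1 * \sum_(j < n) mu j * Qd h (sig j - sig k) x0).
Proof.
move=> sinj hc Rel kn muk x0.
pose dl j := sig j - sig k.
have Rel' x w : \sum_(j < n) mu j * h (w * dl j + x) = 0.
  rewrite -[RHS](Rel w (x - w * sig k)); apply: eq_bigr => j _.
  by congr (_ * h _); rewrite /dl; ring.
have dlk j : (j < n)%N -> (dl j == 0) = (j == k).
  move=> jn; rewrite /dl subr_eq0; apply/eqP/eqP => [/sinj //|->] //.
pose S := \sum_(j < n) `|dl j|.
have dlS (j : 'I_n) : `|dl j| <= S.
  rewrite /S (bigD1 j) //= lerDl; apply: sumr_ge0 => i _; exact: normr_ge0.
pose a := x0 - 2 - S.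
pose G := fun z => (\int[lebesgue_measure]_(t in `[a, z]) h t)%R.
have Gd z : a < z -> is_derive z 1 G (h z) by move=> az; exact: ftc_loc.
pose GQ dl y := if dl == 0 then 0 else (G (y + dl) - G y) / dl.
pose Psi y := - (mu k)^-1 * \sum_(j < n) mu j * GQ (dl j) y.
have Claim1 y : `|y - x0| < 1 -> h y = Psi y.
  move=> yx0; have ylo := ltr_distlCBl yx0.
  pose E j w := if dl j == 0 then w * h y else (G (w * dl j + y) - G y) / dl j.
  pose Theta w := \sum_(j < n) mu j * E j w.
  have hE (j : 'I_n) (w : R) : 0 <= w <= 1 -> is_derive w 1 (E j) (h (w * dl j + y)).
    move=> w01; rewrite /E; case Ej: (dl j == 0).
      rewrite (eqP Ej) mulr0 add0r.
      have -> : (fun w0 : R => w0 * h y) = (fun w0 => w0 * h y + 0).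
        by apply/funext => ?; rewrite addr0.
      exact: (@is_derive_aff (h y) 0 w).
    apply: isd_val.
      apply: isd_mulc; apply: isd_sub.
      apply: is_derive_comp_aff; apply: Gd.
      rewrite /a; have := @test w (dl j) S w01 (dlS j); lra.
    by rewrite subr0 -mulrA mulfV ?mulr1 ?Ej.
  have hT (w : R) : 0 <= w <= 1 -> is_derive w 1 Theta 0.
    move=> w01; apply: isd_val.
      refine (@isd_sum n (fun j w => mu j * E j w) (fun j => mu j * h (w * dl j + y)) w _) => j.
      by apply: isd_cmul; apply: hE.
    exact: Rel'.
  have Hd : forall w : R, w \in `]0, 1[ -> is_derive w 1 Theta ((fun _ => 0 : R) w).
    move=> w; rewrite in_itv /= => /andP[w0 w1]; apply: hT.
    by rewrite (ltW w0) (ltW w1).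
  have Hc : {within `[0, 1], continuous Theta}.
    apply: continuous_in_subspaceT => w; rewrite inE /= in_itv /= => w01.
    have [dT _] := hT w w01.
    exact/differentiable_continuous/derivable1_diffP.
  have [c _] := @MVT_segment R Theta (fun _ => 0) 0 1 ler01 Hd Hc.
  rewrite mul0r => /eqP; rewrite subr_eq0 => /eqP T10.
  have T0 : Theta 0 = 0.
    rewrite /Theta big1 // => j _; rewrite /E.
    by case: (dl j == 0); rewrite ?mul0r ?add0r ?subrr ?mul0r ?mulr0.
  have T1 : Theta 1 = mu k * h y + \sum_(j < n) mu j * GQ (dl j) y.
    rewrite /Theta.
    have -> : \sum_(j < n) mu j * E j 1 =
        \sum_(j < n) (mu j * (if dl j == 0 then h y else 0) + mu j * GQ (dl j) y).
      apply: eq_bigr => j _; rewrite -mulrDr /E /GQ.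
      by case: ifP => Ej; rewrite ?Ej ?mul1r ?addr0 ?add0r // (addrC (dl j)).
    rewrite big_split /=; congr (_ + _).
    rewrite (bigD1 (Ordinal kn)) //= big1 ?addr0.
      by rewrite dlk // eqxx.
    move=> j; rewrite -val_eqE /= => jk.
    by rewrite dlk // (negPf jk) mulr0.
  move: T10; rewrite T0 T1 => /eqP; rewrite addr_eq0 => /eqP HH.
  by rewrite /Psi mulNr -mulrN -HH mulrA mulVf // mul1r.
have Claim2 : is_derive x0 1 Psi (- (mu k)^-1 * \sum_(j < n) mu j * Qd h (sig j - sig k) x0).
  apply: isd_cmul.
  refine (@isd_sum n (fun j y => mu j * GQ (dl j) y) (fun j => mu j * Qd h (sig j - sig k) x0) x0 _) => j.
  apply: isd_cmul.
  rewrite /GQ /Qd -/(dl j); case Ej: (dl j == 0); first exact: isd_cst.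
  apply: isd_mulc; apply: isd_sub; last first.
    apply: Gd; rewrite /a; have := normr_ge0 (dl j); have := dlS j; lra.
  apply: isd_shift; apply: Gd.
  rewrite /a; have := lerNnormlW (dlS j); lra.
apply: near_eq_is_derive Claim2.
near=> y; apply/esym/Claim1; near: y.
apply/nbhs_ballP; exists 1 => //= y.
by rewrite /ball /= distrC.
Unshelve. all: by end_near. Qed.

Lemma Qd_cont h (dl : R) : continuous h -> continuous (Qd h dl).
Proof.
move=> hc; rewrite /Qd; case: (dl == 0); first by move=> x; exact: cvg_cst.
move=> x; apply: cvgMr_tmp.
apply: continuousB; last exact: hc.
apply: continuous_comp; last exact: hc.
by apply: continuousD; [exact: cvg_id|exact: cvg_cst].
Qed.

Lemma poly_prim (p : {poly R}) : exists P : {poly R}, P^`() = p /\ (size P <= (size p).+1)%N.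
Proof.
exists (\poly_(i < (size p).+1) (if i is i'.+1 then p`_i' / i'.+1%:R else 0)).
split; last exact: size_poly.
apply/polyP => i; rewrite coef_deriv coef_poly.
case: ltnP => H.
  by rewrite -[LHS]mulr_natr divfK // pnatr_eq0.
by rewrite nth_default ?mul0rn // -ltnS.
Qed.

Lemma core (n : nat) (sig : nat -> R) : injective sig -> forall (K : nat) (h : R -> R) (mu : nat -> R),
  continuous h -> (forall w b, \sum_(j < n) mu j * h (w * sig j + b) = 0) ->
  \sum_(j < n) mu j * sig j ^+ K != 0 ->
  exists p : {poly R}, (size p <= K)%N /\ forall x, h x = p.[x].
Proof.
move=> sinj; elim=> [|K IH] h mu hc Rel mom.
  exists 0; split; first by rewrite size_poly0.
  move=> x; rewrite horner0.
  have := Rel 0 x; under eq_bigr => j _ do rewrite mul0r add0r.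
  rewrite -mulr_suml => /eqP; rewrite mulf_eq0 => /orP[H|/eqP //].
  by move: mom; under eq_bigr => j _ do rewrite expr0 mulr1; rewrite H.
have [k [kn muk]] : exists k, (k < n)%N /\ mu k != 0.
  apply: contrapT => H; move/eqP: mom; apply; apply: big1 => j _.
  have [mj|mj] := eqVneq (mu j) 0; first by rewrite mj mul0r.
  by exfalso; apply: H; exists j.
pose h' x := - (mu k)^-1 * \sum_(j < n) mu j * Qd h (sig j - sig k) x.
have hd (x : R) : is_derive x 1 h (h' x) := @regularity n sig h mu k sinj hc Rel kn muk x.
have h'c : continuous h'.
  move=> x; apply: cvgMl_tmp.
  apply: (@cvg_sumf _ _ _ n (fun j x => mu j * Qd h (sig j - sig k) x)) => j; apply: cvgMl_tmp.
  exact: Qd_cont.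
have Rel' w b : \sum_(j < n) (mu j * sig j) * h' (w * sig j + b) = 0.
  pose W w := \sum_(j < n) mu j * h (w * sig j + b).
  have HW : is_derive w 1 W (\sum_(j < n) mu j * (h' (w * sig j + b) * sig j)).
    refine (@isd_sum n (fun j w => mu j * h (w * sig j + b)) _ w _) => j.
    by apply: isd_cmul; apply: is_derive_comp_aff.
  have W0 : W = fun _ => 0 by apply/funext => w'; exact: Rel.
  rewrite W0 in HW; have := @derive_val _ _ _ _ _ _ _ HW.
  rewrite derive_cst => H0; rewrite [RHS]H0; apply: eq_bigr => j _; ring.
have mom' : \sum_(j < n) (mu j * sig j) * sig j ^+ K != 0.
  by move: mom; under eq_bigr => j _ do rewrite exprS mulrA.
have [p [sp hp]] := IH h' (fun j => mu j * sig j) h'c Rel' mom'.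
have [P [dP sP]] := poly_prim p.
pose f x := h x - P.[x].
have fd (x : R) : is_derive x 1 f 0.
  have H3 := @isd_sub h (horner P) x _ _ (hd x) (is_derive_poly P x).
  apply: (@isd_val _ _ _ _ H3).
  by rewrite dP -hp subrr.
exists (P + (f 0)%:P); split.
  apply: leq_trans (size_polyD _ _) _; rewrite geq_max (leq_trans sP) //.
  by apply: leq_trans (size_polyC_leq1 _) _.
move=> x; rewrite hornerD hornerC -(@is_derive_0_is_cst R f x 0 fd) /f.
by rewrite addrC subrK.
Qed.

Lemma lim_q (rho : R -> R) (x0 c : R) : derivable rho x0 1 ->
  (fun a => a^-1 * (rho (a * c + x0) - rho x0)) @ 0^' --> c * derive1 rho x0.
Proof.
move=> dr; have dif : differentiable rho x0 by apply/derivable1_diffP.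
have dc : derivable rho x0 c := diff_derivable dif.
have E : 'D_c rho x0 = c * derive1 rho x0.
  rewrite deriveE // derive1E deriveE //.
  rewrite -[X in 'd _ _ X]mulr1.
  by rewrite (_ : c * 1 = c *: (1 : R)) // linearZ.
rewrite -E.
exact: dc.
Qed.
Lemma peel (rho : R -> R) (x0 : R) (D : nat) (u : R -> R) :
  derivable rho x0 1 -> derive1 rho x0 != 0 ->
  (forall a : R, exists p : {poly R}, (size p <= D.+1)%N /\ forall s, rho (a * u s + x0) = p.[s]) ->
  exists p : {poly R}, (size p <= D.+1)%N /\ forall s, u s = p.[s].
Proof.
move=> dr r0 Hp.
pose xs := fun i : nat => (i%:R : R).
have xinj : injective xs by move=> i j /eqP; rewrite eqr_nat => /eqP.
have n0 : (0 < D.+1)%N by [].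
pose L i := tnth (@lagrange R D.+1 xs) i.
pose q a y := a^-1 * (rho (a * u y + x0) - rho x0).
have key a s : a != 0 -> q a s = \sum_(i < D.+1) q a (xs i) * (L i : {poly R}).[s].
  move=> a0; have [p [sp hp]] := Hp a.
  pose Q := a^-1 *: (p - (rho x0)%:P).
  have sQ : (size Q <= D.+1)%N.
    apply: leq_trans (size_scale_leq _ _) _.
    apply: leq_trans (size_polyD _ _) _; rewrite geq_max sp /=.
    by rewrite size_polyN (leq_trans (size_polyC_leq1 _)).
  have hQ y : Q.[y] = q a y by rewrite /Q hornerZ hornerD hornerN hornerC -hp.
  rewrite -hQ {1}(lagrange_gen n0 xinj sQ) horner_sum.
  by apply: eq_bigr => i _; rewrite hornerM hornerC hQ.
have r'0 := r0.
pose r' := derive1 rho x0.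
have Hs s : u s * r' = \sum_(i < D.+1) (u (xs i) * r') * (L i : {poly R}).[s].
  have Hl := @lim_q rho x0 (u s) dr.
  have Hr : (\sum_(i < D.+1) q a (xs i) * (L i : {poly R}).[s]) @[a --> 0^'] -->
            \sum_(i < D.+1) (u (xs i) * r') * (L i : {poly R}).[s].
    apply: (@cvg_sumf _ _ _ D.+1 (fun i a => q a (xs i) * (L i : {poly R}).[s])) => i.
    by apply: cvgMr_tmp; exact: lim_q.
  have Hl' : (q a s) @[a --> 0^'] --> \sum_(i < D.+1) (u (xs i) * r') * (L i : {poly R}).[s].
    apply: cvg_trans Hr; apply: near_eq_cvg; near=> a.
    apply/esym/key; near: a; exact: nbhs_dnbhs_neq.
  exact: (cvg_unique _ Hl Hl').
exists (\sum_(i < D.+1) u (xs i) *: (L i : {poly R})); split.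
  apply: (big_ind (fun q : {poly R} => (size q <= D.+1)%N)).
  - by rewrite size_poly0.
  - by move=> p1 p2 h1 h2; apply: leq_trans (size_polyD _ _) _; rewrite geq_max h1 h2.
  - by move=> i _; apply: leq_trans (size_scale_leq _ _) _; rewrite size_lagrange_.
move=> s; apply: (mulIf r0); rewrite Hs horner_sum mulr_suml.
by apply: eq_bigr => i _; rewrite hornerZ mulrAC.
Unshelve. all: by end_near.
Qed.
End H.

Theorem propositionC6 (R : realType) (d : nat) (Ns : seq nat)
  (rho : R -> R) (x0 : R) (Omega : set 'cV[R]_d) :
  (0 < d)%N -> all (fun n => 0 < n)%N Ns -> (2 <= size Ns)%N ->
  continuous rho ->
  derivable rho x0 1 -> derive1 rho x0 != 0 ->
  interior Omega !=set0 ->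
  ~ inf_lin_indep_realizations rho Ns Omega ->
  is_polynomial rho.
Proof.
move=> d0 allp L2 rc dr r0 intO NI.
have [s Hs] := @span_exists R d Ns rho Omega NI.
set m := size s.
have lastp : (0 < last d Ns)%N.
  have : forall (Ms : seq nat) (n0 : nat), (0 < n0)%N -> all (fun n => 0 < n)%N Ms ->
      (0 < last n0 Ms)%N.
    by elim=> // n1 Ms IH n0 _ /andP[n1p allp'] /=; exact: IH.
  exact.
pose i0 : 'I_(last d Ns) := Ordinal lastp.
pose id0 : 'I_d := Ordinal d0.
case: intO => p pint.
pose e0 : 'cV[R]_d := \col_i (if (i : nat) == 0%N then 1 else 0).
have [r rpos Hr] : exists2 r : R, 0 < r & forall t : R, `|t| < r -> Omega (p + t *: e0).
  have hc : (fun t : R => p + t *: e0) @ (0 : R) --> p + 0 *: e0.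
    apply: cvgD; first exact: cvg_cst.
    by apply: cvgZr_tmp; exact: cvg_id.
  rewrite scale0r addr0 in hc.
  have := hc _ pint; rewrite /= => /nbhs_ballP [r rpos Hr].
  exists r => // t tr; apply: Hr; rewrite /ball /= sub0r normrN //.
pose tj (j : nat) : R := j%:R * r / m.+2%:R.
pose xpt j := p + tj j *: e0.
have Oxpt j : (j <= m)%N -> Omega (xpt j).
  move=> jm; apply: Hr; rewrite /tj ger0_norm; last first.
    by rewrite divr_ge0 // mulr_ge0 // ltW.
  rewrite ltr_pdivrMr ?ltr0n // [X in _ < X]mulrC ltr_pM2r // ltr_nat.
  by apply: leq_trans (leqnSn _); rewrite ltnS.
pose Phi0 := @mkNN R (fun _ => (0 : R, 0 : R)) 0 d Ns.
pose G : 'M[R]_(m, m.+1) := \matrix_(i, j) realize rho (nth Phi0 s i) (xpt j) i0 0.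
have [mu0 [[j0 muj0] Hmu]] := @ker_exists R m G.
pose mu (j : nat) := mu0 (inord j).
have RelAll : forall Phi, \sum_(j < m.+1) mu j * realize rho Phi (xpt j) i0 0 = 0.
  move=> Phi; have [a Ha] := Hs Phi.
  transitivity (\sum_(i < m) a i * \sum_(j < m.+1) G i j * mu0 j); last first.
    by rewrite big1 // => i _; rewrite Hmu mulr0.
  under eq_bigr => j _ do rewrite (Ha _ (Oxpt j (ltn_ord j))) summxE mulr_sumr.
  rewrite exchange_big /=; apply: eq_bigr => i _.
  rewrite mulr_sumr; apply: eq_bigr => j _.
  rewrite !mxE /mu inord_val (set_nth_default Phi0) //.
  ring.
pose k0 := (size Ns).-1.
have k0S : size Ns = k0.+1 by rewrite /k0 prednK // (leq_trans _ L2).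
have k0p : (0 < k0)%N by rewrite -ltnS -k0S.
pose sig (j : nat) := p id0 0 + tj j.
have sinj : injective sig.
  move=> i j /addrI; rewrite /tj => /(mulIf _) H.
  have : i%:R * r = j%:R * r :> R.
    by apply: H; rewrite invr_eq0 pnatr_eq0.
  by move/(mulIf (lt0r_neq0 rpos))/eqP; rewrite eqr_nat => /eqP.
have [K [Km momK]] : exists K, (K < m.+1)%N /\ \sum_(j < m.+1) mu j * sig j ^+ K != 0.
  apply: moment_nz => //; exists j0; split => //.
  by rewrite /mu inord_val.
have stepC : forall ps : nat -> R * R, ps 0%N = (1, 0) ->
    exists q : {poly R}, (size q <= m.+1)%N /\ forall t, Hof R rho ps 0 k0 t = q.[t].
  move=> ps ps0.
  suff RelC : forall w b, \sum_(j < m.+1) mu j * Hof R rho ps 0 k0 (w * sig j + b) = 0.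
    have [q [sq hq]] := @core R m.+1 sig sinj K (Hof R rho ps 0 k0) mu (@Hof_cont R rho ps k0 0 rc) RelC momK.
    by exists q; split => //; apply: leq_trans sq _; apply: leq_trans (ltnW Km) _.
  move=> w b.
  pose ps' i := if i == 0%N then (w, b) else if i == k0 then (1, 0) else ps i.
  rewrite -[RHS](RelAll (mkNN R ps' 0 d Ns)); apply: eq_bigr => j _; congr (_ * _).
  rewrite (@realize_mk R rho ps' Ns d 0 (xpt j) (sig j)) //; last first.
    move=> j' j'0; rewrite /xpt /sig !mxE; congr (_ + _).
      by congr (p _ _); apply: val_inj.
    by rewrite j'0 eqxx mulr1.
  rewrite (@chainf_Hof R rho ps' Ns 0 _ k0) // add0n /ps' eqxx (negPf (lt0n_neq0 k0p)) /=.
  rewrite mul1r addr0.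
  have Hk : forall k (ps2 : nat -> R * R), (0 < k)%N -> ps2 0%N = (w, b) ->
      (forall i, (1 <= i < k)%N -> ps2 i = ps i) ->
      Hof R rho ps 0 k (w * sig j + b) = Hof R rho ps2 0 k (sig j).
    case=> // k1 ps2 _ H0 Hi /=; rewrite ps0 H0 /= mul1r addr0.
    apply: Hof_ext => i /andP[i1 ik]; apply/esym/Hi; rewrite i1 /=.
    by rewrite add1n in ik.
  apply: Hk => //.
  move=> i /andP[i1 ik]; rewrite (negPf (lt0n_neq0 i1)).
  by rewrite (ltn_eqF ik).
have loop : forall jj, (jj < k0)%N -> forall ps : nat -> R * R, ps 0%N = (1, 0) ->
    exists q : {poly R}, (size q <= m.+1)%N /\ forall t, Hof R rho ps 0 (k0 - jj) t = q.[t].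
  elim=> [|jj IH] jk ps ps0; first by rewrite subn0; exact: stepC.
  set k := (k0 - jj.+1)%N.
  have kS : (k0 - jj)%N = k.+1 by rewrite /k subnS prednK // subn_gt0 ltnW.
  have kp : (0 < k)%N by rewrite /k subn_gt0.
  rewrite -/k.
  apply: (@peel R rho x0 m (Hof R rho ps 0 k) dr r0) => a.
  pose ps2 i := if i == k then (a, x0) else ps i.
  have ps20 : ps2 0%N = (1, 0) by rewrite /ps2 eq_sym (negPf (lt0n_neq0 kp)).
  have [q [sq hq]] := IH (ltnW jk) ps2 ps20.
  exists q; split => // t; rewrite -hq kS Hof_outer add0n /ps2 eqxx /=.
  congr (rho (_ * _ + _)); apply: Hof_ext => i /andP[_ ik].
  by rewrite add0n in ik; rewrite (ltn_eqF ik).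
have k0lt : (k0.-1 < k0)%N by rewrite prednK // leqnn.
have [q [_ hq]] := loop k0.-1 k0lt (fun _ => (1, 0)) erefl.
exists q => t; rewrite -hq.
have -> : (k0 - k0.-1)%N = 1%N by rewrite -(prednK k0p) subSnn.
by rewrite /= mul1r addr0.
Qed.
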